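(* For every closed subset $\mathtt{S}$ of $\mathbf{N}^{+}\times\mathbf{N}^{-}$, if $\mathtt{S}\setminus\big((\{1\}\times\mathbf{N}^{-})\cup(\mathbf{N}^{+}\times\{-1,0,1\})\big)$ is infinite, then either $\{2\}\times\mathbf{N}^{-}\subseteq\mathtt{S}$ or $\mathbf{N}^{+}\times\{2\}\subseteq\mathtt{S}$.
   Context: $\mathbb{N}=\{0,1,2,\dots\}$, $\mathbf{N}^{+}=\mathbb{N}\setminus\{0\}$, $\mathbf{N}^{-}=\mathbb{N}\cup\{-1\}$. On $\mathbf{N}^{+}\times\mathbf{N}^{-}$, $(m,n)\ll(m',n')$ iff $m\le m'$ and $n\le n'$. For $(m,n)\in\mathbf{N}^{+}\times\mathbf{N}^{-}$, $\pi(m,n)=\{(m',n')\in\mathbf{N}^{+}\times\mathbf{N}^{-}:(m',n')\ll(m,n)\}$. A subset $\mathtt{S}\subseteq\mathbf{N}^{+}\times\mathbf{N}^{-}$ is closed if $(m,n)\in\mathtt{S}$ implies $\pi(m,n)\subseteq\mathtt{S}$. *)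

(* Defs.v *)
From Stdlib Require Import ZArith List.
Open Scope Z_scope.

(* Points of N^+ x N^- are encoded as pairs of integers (m, n) with
   m >= 1 and n >= -1. *)
Definition NplusNminus (p : Z * Z) : Prop := 1 <= fst p /\ -1 <= snd p.

Definition ll (p q : Z * Z) : Prop := fst p <= fst q /\ snd p <= snd q.

Definition pi_set (p : Z * Z) (q : Z * Z) : Prop := NplusNminus q /\ ll q p.

Definition closed_set (S : Z * Z -> Prop) : Prop :=
  forall p, S p -> forall q, pi_set p q -> S q.

Definition infinite_set (A : Z * Z -> Prop) : Prop :=
  ~ exists l : list (Z * Z), forall p, A p -> In p l.

Definition excluded (p : Z * Z) : Prop :=
  (fst p = 1 /\ -1 <= snd p) \/ (1 <= fst p /\ -1 <= snd p <= 1).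

(* Main.v *)
Require Import Defs.
From Stdlib Require Import ZArith List Lia Classical.
Open Scope Z_scope.

Theorem lemma3 (S : Z * Z -> Prop) :
  (forall p, S p -> NplusNminus p) ->
  closed_set S ->
  infinite_set (fun p => S p /\ ~ excluded p) ->
  (forall n : Z, -1 <= n -> S (2, n)) \/ (forall m : Z, 1 <= m -> S (m, 2)).
Proof.
  intros HN Hc Hinf.
  destruct (classic (forall n : Z, -1 <= n -> S (2, n))) as [H|H]; [left; exact H|].
  destruct (classic (forall m : Z, 1 <= m -> S (m, 2))) as [H'|H']; [right; exact H'|].
  exfalso.
  apply not_all_ex_not in H as [n0 Hn0].
  apply imply_to_and in Hn0 as [Hn0a Hn0b].
  apply not_all_ex_not in H' as [m0 Hm0].
  apply imply_to_and in Hm0 as [Hm0a Hm0b].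
  apply Hinf.
  exists (flat_map (fun i => map (fun j => (Z.of_nat i, Z.of_nat j)) (seq 0 (Z.to_nat n0)))
            (seq 0 (Z.to_nat m0))).
  intros [m n] [HS Hex].
  pose proof (HN _ HS) as [H1 H2]; simpl in H1, H2.
  unfold excluded in Hex; simpl in Hex.
  assert (Hm : 2 <= m) by lia.
  assert (Hn : 2 <= n) by lia.
  assert (Hnl : n < n0).
  { destruct (Z_lt_le_dec n n0) as [h|h]; [exact h|].
    exfalso; apply Hn0b; apply (Hc _ HS). split; [split; simpl; lia| split; simpl; lia]. }
  assert (Hml : m < m0).
  { destruct (Z_lt_le_dec m m0) as [h|h]; [exact h|].
    exfalso; apply Hm0b; apply (Hc _ HS). split; [split; simpl; lia| split; simpl; lia]. }
  apply in_flat_map. exists (Z.to_nat m). split.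
  - apply in_seq. lia.
  - apply in_map_iff. exists (Z.to_nat n). split.
    + f_equal; lia.
    + apply in_seq. lia.
Qed.
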